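(* Let $n\ge2$ and $1\le s<\ell$ be integers, and consider the saturation SQGT model with thresholds $(1,2,\dots,s)$, in which a test $\mathbf{x}\in\{0,1\}^n$ applied to $\mathbf{b}$ returns $\min(\mathbf{x}\cdot\mathbf{b},s)$. Then there exists a binary test matrix $\mathbf{C}$ with $n$ columns and at most $\frac{2\ell}{s}+2\log_2 n+3$ rows that solves $\mathrm{Burst}(n,\le\ell,\underline{\eta})$, i.e. any two distinct bursts in $\{0,1\}^n$ of lengths between $1$ and $\ell$ yield distinct outcome vectors.
   Context: Items are indexed $0,\dots,n-1$. A burst with head $a$ and tail $t$ ($0\le a\le t\le n-1$) is the vector in $\{0,1\}^n$ whose $j$-th coordinate is $1$ iff $a\le j\le t$; its length is $t-a+1$. $\mathrm{Burst}(n,\le\ell,\underline{\eta})$ is the problem of identifying an unknown burst of length in $\{1,\dots,\ell\}$ from the outcome vector (entrywise outcomes of the rows of the test matrix). *)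

(* Defs.v *)
From mathcomp Require Import all_boot.
From Stdlib Require Import Reals.
Unset Printing Implicit Defensive.

Definition burst (n a t : nat) : 'I_n -> bool := fun j => (a <= j) && (j <= t).

Definition is_burst_le (n l : nat) (a t : nat) : bool :=
  [&& a <= t, t < n & t - a + 1 <= l].

Definition sat_outcome (n s : nat) (x b : 'I_n -> bool) : nat :=
  minn (\sum_(j < n) (x j && b j)) s.

Definition outcome_vec (m n s : nat) (C : 'I_m -> 'I_n -> bool) (b : 'I_n -> bool)
  : 'I_m -> nat := fun i => sat_outcome n s (C i) b.

Definition solves_burst (m n l s : nat) (C : 'I_m -> 'I_n -> bool) : Prop :=
  forall a1 t1 a2 t2 : nat,
    is_burst_le n l a1 t1 -> is_burst_le n l a2 t2 ->
    (forall j, burst n a1 t1 j = burst n a2 t2 j) \/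
    exists i, outcome_vec m n s C (burst n a1 t1) i <> outcome_vec m n s C (burst n a2 t2) i.

(* Main.v *)
Require Import Defs.
From mathcomp Require Import all_boot.
From Stdlib Require Import Reals.
From mathcomp Require Import zify.
From Stdlib Require Import Classical Lra.
Import ssrnat.
Set Implicit Arguments. Unset Strict Implicit.

Definition S (f : nat -> nat) (a L : nat) : nat := \sum_(x < L) f (a + x).

Lemma sumD (h : nat -> nat) A B :
  \sum_(x < A + B) h x = \sum_(x < A) h x + \sum_(y < B) h (A + y).
Proof. by rewrite big_split_ord /=. Qed.

Lemma S_shift (h : nat -> nat) a d L :
  S h (a + d) L + S h a d = S h a L + S h (a + L) d.
Proof.
rewrite /S.
have E1 := sumD (fun x => h (a + x)) d L.
have E2 := sumD (fun x => h (a + x)) L d.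
have E : \sum_(x < d + L) h (a + x) = \sum_(x < L + d) h (a + x) by rewrite addnC.
rewrite E1 E2 in E.
have F1 : \sum_(y < d) h (a + (L + y)) = \sum_(x < d) h (a + L + x).
  by apply: eq_bigr => i _; rewrite addnA.
have F2 : \sum_(y < L) h (a + (d + y)) = \sum_(x < L) h (a + d + x).
  by apply: eq_bigr => i _; rewrite addnA.
rewrite F1 F2 in E. by rewrite addnC E.
Qed.

Lemma S_mono (h : nat -> nat) a L L' : L <= L' -> S h a L <= S h a L'.
Proof.
move=> hL; rewrite /S -(subnKC hL) (sumD (fun x => h (a + x))); exact: leq_addr.
Qed.

Lemma S_leL (f : nat -> bool) a L : S (fun j => f j) a L <= L.
Proof.
rewrite /S -[X in _ <= X](card_ord L) -sum1_card; apply: leq_sum => i _; exact: leq_b1.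
Qed.

Lemma S_const c a L : S (fun _ => c) a L = L * c.
Proof. by rewrite /S sum_nat_const card_ord. Qed.

Lemma S_pos (f : nat -> bool) a L :
  (0 < S (fun j => f j) a L) <-> exists x, x < L /\ f (a + x).
Proof.
split.
- move=> H; apply/not_all_not_ex => Hn.
  move: H; rewrite /S big1 // => i _.
  case E: (f (a + i)) => //; exfalso; apply: (Hn i); split => //.
- move=> [x [hx hf]]; rewrite /S (bigD1 (Ordinal hx)) //= hf; by rewrite add1n.
Qed.

Lemma bin_exp K x : x < 2 ^ K -> \sum_(i < K) 2 ^ i * odd (x %/ 2 ^ i) = x.
Proof.
elim: K x => [|K IH] x hx.
  by rewrite big_ord0; move: hx; rewrite expn0; case: x.
rewrite big_ord_recl /= expn0 divn1 mul1n.
have hx2 : x %/ 2 < 2 ^ K by rewrite ltn_divLR // mulnC -expnS.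
have -> : \sum_(i < K) 2 ^ bump 0 i * odd (x %/ 2 ^ bump 0 i) =
          2 * \sum_(i < K) 2 ^ i * odd (x %/ 2 %/ 2 ^ i).
  rewrite big_distrr /=; apply: eq_bigr => i _.
  by rewrite /bump /= add1n expnS mulnA -divnMA -expnS.
rewrite IH // mul2n divn2.
exact: odd_double_half.
Qed.

Lemma S_bits K (w : nat -> nat) a L :
  (forall x, x < L -> w (a + x) < 2 ^ K) ->
  \sum_(i < K) 2 ^ i * S (fun j => odd (w j %/ 2 ^ i)) a L = S w a L.
Proof.
move=> hw; rewrite /S.
under eq_bigr => i _ do rewrite big_distrr /=.
rewrite exchange_big /=; apply: eq_bigr => x _; exact: bin_exp (hw x (ltn_ord x)).
Qed.

Lemma sum_sel Q (wt : nat -> nat) v : v < Q -> \sum_(g < Q) wt g * (v == g) = wt v.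
Proof.
move=> hv; rewrite (bigD1 (Ordinal hv)) //= eqxx muln1 big1 ?addn0 // => i hi.
have : v != i by apply: contra hi => /eqP e; apply/eqP; apply: val_inj.
by move/negbTE => ->; rewrite muln0.
Qed.

Lemma S_class Q (c wt : nat -> nat) a L :
  (forall j, c j < Q) ->
  \sum_(g < Q) wt g * S (fun j => c j == g) a L = S (fun j => wt (c j)) a L.
Proof.
move=> hc; rewrite /S.
under eq_bigr => i _ do rewrite big_distrr /=.
rewrite exchange_big /=; apply: eq_bigr => x _; exact: sum_sel.
Qed.

Lemma S_periodic (h : nat -> nat) P a :
  (forall x, h (x + P) = h x) -> S h a P = S h 0 P.
Proof.
move=> hp; elim: a => // a IH.
have E := S_shift h a 1 P.
have E1 : S h a 1 = h a by rewrite /S big_ord1 addn0.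
have E2 : S h (a + P) 1 = h a by rewrite /S big_ord1 addn0 hp.
rewrite E1 E2 addn1 in E. rewrite -IH. by apply/eqP; rewrite -(eqn_add2r (h a)) E.
Qed.

Lemma G_full s Q g V : 0 < s -> V <= Q ->
  S (fun j => (j %/ s) %% Q == g) 0 (V * s) = s * (g < V).
Proof.
move=> hs; elim: V => [|V IH] hV; first by rewrite /S mul0n big_ord0 muln0.
rewrite mulSn addnC /S (sumD (fun x => nat_of_bool ((0 + x) %/ s %% Q == g))).
have := IH (ltnW hV); rewrite /S => ->.
have -> : \sum_(y < s) nat_of_bool ((0 + (V * s + y)) %/ s %% Q == g) = s * (V == g).
  rewrite -(S_const (nat_of_bool (V == g)) 0 s) /S; apply: eq_bigr => i _.
  by rewrite add0n divnMDl // divn_small // addn0 modn_small.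
rewrite -mulnDr; congr (_ * _).
case: (ltngtP g V) => h.
- by rewrite ltnS (ltnW h).
- by rewrite ltnS leqNgt h.
- by rewrite h ltnS leqnn.
Qed.

Lemma G_exact s Q g a L : 0 < s -> g < Q -> L <= Q * s ->
  S (fun j => (j %/ s) %% Q == g) a L <= s.
Proof.
move=> hs hg hL.
apply: leq_trans (S_mono _ _ hL) _.
rewrite S_periodic; last first.
  by move=> x; rewrite divnDMl // modnDr.
by rewrite G_full // hg muln1.
Qed.

Lemma sum_burst (h : nat -> bool) n a t : a <= t -> t < n ->
  \sum_(j < n) (h j && ((a <= j) && (j <= t))) = S (fun j => h j) a (t - a + 1).
Proof.
move=> hat htn.
have En : n = a + ((t - a + 1) + (n - t.+1)) by lia.
rewrite -(big_mkord xpredT (fun j => nat_of_bool (h j && ((a <= j) && (j <= t))))).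
rewrite En big_mkord.
rewrite (sumD (fun j => nat_of_bool (h j && ((a <= j) && (j <= t))))).
rewrite big1 ?add0n; last first.
  by move=> i _; rewrite (leqNgt a i) (ltn_ord i) /= andbF.
rewrite (sumD (fun j => nat_of_bool (h (a + j) && ((a <= a + j) && (a + j <= t))))).
rewrite [X in _ + X = _]big1 ?addn0; last first.
  by move=> i _; rewrite (_ : a + (t - a + 1 + i) <= t = false) ?andbF //; apply/negbTE; rewrite -ltnNge; lia.
rewrite /S; apply: eq_bigr => i _.
have hi := ltn_ord i.
by rewrite leq_addr (_ : a + i <= t) ?andbT //; lia.
Qed.

Lemma S_ext (f g : nat -> nat) a L :
  (forall x, x < L -> f (a + x) = g (a + x)) -> S f a L = S g a L.
Proof. move=> h; rewrite /S; apply: eq_bigr => i _; exact: h. Qed.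

Lemma S_le (f g : nat -> nat) a L :
  (forall x, x < L -> f (a + x) <= g (a + x)) -> S f a L <= S g a L.
Proof. move=> h; rewrite /S; apply: leq_sum => i _; exact: h. Qed.

Lemma S_le2 (f g : nat -> nat) a b L :
  (forall x, x < L -> f (a + x) <= g (b + x)) -> S f a L <= S g b L.
Proof. move=> h; rewrite /S; apply: leq_sum => i _; exact: h. Qed.

Lemma S_ext2 (f g : nat -> nat) a b L :
  (forall x, x < L -> f (a + x) = g (b + x)) -> S f a L = S g b L.
Proof. move=> h; rewrite /S; apply: eq_bigr => i _; exact: h. Qed.

Lemma S_add (f g : nat -> nat) a L : S (fun j => f j + g j) a L = S f a L + S g a L.
Proof. by rewrite /S big_split. Qed.

Lemma S_scale c (f : nat -> nat) a L : S (fun j => c * f j) a L = c * S f a L.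
Proof. by rewrite /S big_distrr. Qed.

Lemma minE' m n : m <= n -> minn m n = m.
Proof. by move/minn_idPl. Qed.

Lemma min_pos x y s : 0 < s -> minn x s = minn y s -> (0 < x) = (0 < y).
Proof. move=> hs E; apply/idP/idP => h; lia. Qed.

Lemma S_or (f : nat -> bool) a L : 0 < L ->
  (forall x, x < L -> f (a + x) = f a \/ f (a + x) = f (a + L.-1)) ->
  (0 < S (fun j => f j) a L) = f a || f (a + L.-1).
Proof.
move=> hL hf; apply/idP/idP.
- move/S_pos => [x [hx hfx]]; case: (hf x hx) => <-; rewrite hfx ?orbT //.
- case/orP => h; apply/S_pos.
  + by exists 0; rewrite addn0.
  + by exists L.-1; split => //; rewrite prednK.
Qed.

Definition tst (s Q P k K : nat) (i j : nat) : bool :=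
  if i < Q then (j %/ s) %% Q == i
  else if i < Q + k then odd ((j %% s) %/ 2 ^ (i - Q))
  else if i < Q + k + K then odd ((j %/ P) %/ 2 ^ (i - Q - k))
  else ~~ odd ((j %/ P) %/ 2 ^ (i - Q - k - K)).

Lemma tstG s Q P k K g j : g < Q -> tst s Q P k K g j = ((j %/ s) %% Q == g).
Proof. by move=> h; rewrite /tst h. Qed.

Lemma tstH s Q P k K i j : i < k -> tst s Q P k K (Q + i) j = odd ((j %% s) %/ 2 ^ i).
Proof.
move=> h; rewrite /tst (_ : Q + i < Q = false); last by apply/negbTE; rewrite -leqNgt; lia.
by rewrite ltn_add2l h addKn.
Qed.

Lemma tstB s Q P k K i j : i < K -> tst s Q P k K (Q + k + i) j = odd ((j %/ P) %/ 2 ^ i).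
Proof.
move=> h; rewrite /tst (_ : Q + k + i < Q = false); last by apply/negbTE; rewrite -leqNgt; lia.
rewrite (_ : Q + k + i < Q + k = false); last by apply/negbTE; rewrite -leqNgt; lia.
rewrite (_ : Q + k + i < Q + k + K); last by lia.
by rewrite (_ : Q + k + i - Q - k = i) //; lia.
Qed.

Lemma tstB' s Q P k K i j : i < K ->
  tst s Q P k K (Q + k + K + i) j = ~~ odd ((j %/ P) %/ 2 ^ i).
Proof.
move=> h; rewrite /tst (_ : Q + k + K + i < Q = false); last by apply/negbTE; rewrite -leqNgt; lia.
rewrite (_ : Q + k + K + i < Q + k = false); last by apply/negbTE; rewrite -leqNgt; lia.
rewrite (_ : Q + k + K + i < Q + k + K = false); last by apply/negbTE; rewrite -leqNgt; lia.
by rewrite (_ : Q + k + K + i - Q - k - K = i) //; lia.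
Qed.

Lemma bits_sum K x y x' y' : x < 2 ^ K -> y < 2 ^ K -> x' < 2 ^ K -> y' < 2 ^ K ->
  (forall i, i < K -> odd (x %/ 2 ^ i) + odd (y %/ 2 ^ i) = odd (x' %/ 2 ^ i) + odd (y' %/ 2 ^ i)) ->
  x + y = x' + y'.
Proof.
move=> hx hy hx' hy' h.
rewrite -(bin_exp hx) -(bin_exp hy) -(bin_exp hx') -(bin_exp hy') -!big_split /=.
apply: eq_bigr => i _; by rewrite -!mulnDr h.
Qed.

Lemma div_lt b n P K : b < n -> n.-1 %/ P < 2 ^ K -> b %/ P < 2 ^ K.
Proof. move=> hb h; apply: leq_ltn_trans h; apply: leq_div2r; lia. Qed.

Lemma le_sum_eq x y x' y' : x <= x' -> y <= y' -> x + y = x' + y' -> x = x' /\ y = y'.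
Proof. lia. Qed.

Lemma pred_lt a L P : 0 < L -> L < P -> a + L.-1 <= a + 1 * P.
Proof. lia. Qed.

Lemma le1 a L x d : 0 < L -> x < d -> a + L.-1 <= a + L + x.
Proof. lia. Qed.

Lemma le2 a L x d : 0 < L -> x < d -> a + L + x <= a + d + L.-1.
Proof. lia. Qed.

Lemma div_step1 x L q s : 0 < s -> L <= q * s -> (x + L) %/ s <= x %/ s + q.
Proof. move=> hs hL; rewrite -divnDMl //; apply: leq_div2r; by rewrite leq_add2l. Qed.

Lemma div_step2 x L s : 0 < s -> s <= L -> x %/ s + 1 <= (x + L) %/ s.
Proof. move=> hs hL; rewrite -(divnDMl 1) // mul1n; apply: leq_div2r; by rewrite leq_add2l. Qed.

Lemma arith_cases u v : u <= v -> v <= u + 1 -> v = u + 1 \/ v = u.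
Proof. lia. Qed.

Lemma arith1 Q q d u X X' Y Y' F A B : Q = q.+1 -> 0 < d ->
  X' + d * u = X + d * (u + 1) -> Y' + A = Y + B -> Y = Q * X + F -> Y' = Q * X' + F ->
  B <= A + d * q -> False.
Proof. move=> hQ hd h1 h2 h3 h4 h5; subst; nia. Qed.

Lemma arith2 Q d u X X' Y Y' F A B :
  X' + d * u = X + d * u -> Y' + A = Y + B -> Y = Q * X + F -> Y' = Q * X' + F -> B = A.
Proof. move=> h1 h2 h3 h4; subst; nia. Qed.

Lemma mod_bound s n k b : 0 < s -> minn s n <= 2 ^ k -> b < n -> b %% s < 2 ^ k.
Proof.
move=> hs hk hb; apply: leq_trans hk.
have h1 : b %% s < s by rewrite ltn_mod.
have h2 : b %% s <= b by rewrite leq_mod.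
rewrite leq_min h1 /=; exact: leq_ltn_trans h2 hb.
Qed.

Lemma idx1 Q k K i : i < K -> Q + k + i < Q + k + K + K. Proof. lia. Qed.
Lemma idx2 Q k K i : i < K -> Q + k + K + i < Q + k + K + K. Proof. lia. Qed.
Lemma idx3 Q k K i : i < k -> Q + i < Q + k + K + K. Proof. lia. Qed.
Lemma idx0 Q k K i : i < Q -> i < Q + k + K + K. Proof. lia. Qed.

Lemma key s q n k K a L a' L' :
  0 < s -> 0 < L -> 0 < L' -> L <= q * s -> L' <= q * s ->
  a + L <= n -> a' + L' <= n -> a <= a' ->
  minn s n <= 2 ^ k -> n.-1 %/ (q.+1 * s) < 2 ^ K ->
  (forall i, i < q.+1 + k + K + K ->
     minn (S (fun j => tst s q.+1 (q.+1 * s) k K i j) a L) s =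
     minn (S (fun j => tst s q.+1 (q.+1 * s) k K i j) a' L') s) ->
  a = a' /\ L = L'.
Proof.
move=> hs hL hL' hLq hLq' han han' haa hk hK HE.
set Q := q.+1. set P := Q * s.
have hQ : Q = q.+1 by []. have hPd : P = Q * s by [].
have hP0 : 0 < P by rewrite hPd hQ muln_gt0 hs.
have hPL : L < P by rewrite /P /Q mulSn; lia.
have hPL' : L' < P by rewrite /P /Q mulSn; lia.
have hG : forall g, g < Q ->
   S (fun j => (j %/ s) %% Q == g) a L = S (fun j => (j %/ s) %% Q == g) a' L'.
  move=> g hg.
  have := HE g (@idx0 _ _ _ _ hg).
  rewrite !(@S_ext (fun j => tst s Q P k K g j) (fun j => (j %/ s) %% Q == g)); last first.
    by move=> x _; rewrite tstG.
    by move=> x _; rewrite tstG.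
  rewrite !minE' //; apply: G_exact => //; rewrite /Q mulSn; lia.
have hcl : forall j, (j %/ s) %% Q < Q by move=> j; rewrite ltn_mod.
have EL : L = L'.
  have E1 := S_class (fun _ => 1) a L hcl.
  have E2 := S_class (fun _ => 1) a' L' hcl.
  rewrite !S_const !muln1 in E1 E2.
  rewrite -E1 -E2; apply: eq_bigr => g _; by rewrite hG.
subst L'.
have EF : S (fun j => (j %/ s) %% Q) a L = S (fun j => (j %/ s) %% Q) a' L.
  have E1 := S_class (fun x : nat => x) a L hcl.
  have E2 := S_class (fun x : nat => x) a' L hcl.
  rewrite -E1 -E2; apply: eq_bigr => g _; by rewrite hG.
set t := a + L.-1. set t' := a' + L.-1.
have two : forall b, b + L <= n -> forall x, x < L ->
    (b + x) %/ P = b %/ P \/ (b + x) %/ P = (b + L.-1) %/ P.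
  move=> b hb x hx.
  have h1 : b %/ P <= (b + x) %/ P by apply: leq_div2r; lia.
  have h2 : (b + x) %/ P <= (b + L.-1) %/ P by apply: leq_div2r; lia.
  have h3 : (b + L.-1) %/ P <= b %/ P + 1.
    rewrite -(divnDMl 1 b (_ : 0 < P)); last by rewrite /P /Q; lia.
    apply: leq_div2r; lia.
  lia.
have hbit : forall i, i < K -> forall b, b + L <= n ->
    (0 < S (fun j => tst s Q P k K (Q + k + i) j) b L) =
      odd (b %/ P %/ 2 ^ i) || odd ((b + L.-1) %/ P %/ 2 ^ i) /\
    (0 < S (fun j => tst s Q P k K (Q + k + K + i) j) b L) =
      ~~ odd (b %/ P %/ 2 ^ i) || ~~ odd ((b + L.-1) %/ P %/ 2 ^ i).
  move=> i hi b hb; split.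
  - rewrite (@S_ext _ (fun j => odd (j %/ P %/ 2 ^ i))); last by move=> x _; rewrite tstB.
    rewrite (@S_or (fun j => odd (j %/ P %/ 2 ^ i)) b L hL) ?addn0 // => x hx.
    by case: (two b hb x hx) => ->; [left|right].
  - rewrite (@S_ext _ (fun j => ~~ odd (j %/ P %/ 2 ^ i))); last by move=> x _; rewrite tstB'.
    rewrite (@S_or (fun j => ~~ odd (j %/ P %/ 2 ^ i)) b L hL) ?addn0 // => x hx.
    by case: (two b hb x hx) => ->; [left|right].
have hpb : forall i, i < K ->
    odd (a %/ P %/ 2 ^ i) + odd (t %/ P %/ 2 ^ i) =
    odd (a' %/ P %/ 2 ^ i) + odd (t' %/ P %/ 2 ^ i).
  move=> i hi.
  have [A1 A2] := hbit i hi a han.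
  have [B1 B2] := hbit i hi a' han'.
  have e1 := min_pos hs (HE (Q + k + i) (@idx1 _ _ _ _ hi)).
  have e2 := min_pos hs (HE (Q + k + K + i) (@idx2 _ _ _ _ hi)).
  rewrite A1 B1 in e1; rewrite A2 B2 in e2.
  rewrite /t /t'; move: e1 e2.
  by case: (odd (a %/ P %/ 2 ^ i)); case: (odd ((a + L.-1) %/ P %/ 2 ^ i));
     case: (odd (a' %/ P %/ 2 ^ i)); case: (odd ((a' + L.-1) %/ P %/ 2 ^ i)).
have hna : a < n by lia.
have hna' : a' < n by lia.
have hnt : t < n by rewrite /t; lia.
have hnt' : t' < n by rewrite /t'; lia.
have Euv : a %/ P + t %/ P = a' %/ P + t' %/ P.
  apply: (bits_sum (div_lt hna hK) (div_lt hnt hK) (div_lt hna' hK) (div_lt hnt' hK)).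
  exact: hpb.
have hu : a %/ P <= a' %/ P by apply: leq_div2r.
have hv : t %/ P <= t' %/ P by apply: leq_div2r; rewrite /t /t' leq_add2r.
have [Eu Ev] := le_sum_eq hu hv Euv.
have [d Ed] : exists d, a' = a + d by exists (a' - a); rewrite subnKC.
case: (posnP d) => [d0|dpos]; first by rewrite Ed d0 addn0.
exfalso.
set u := a %/ P. set v := t %/ P.
have huv : u <= v by apply: leq_div2r; rewrite /t leq_addr.
have hvu : v <= u + 1.
  rewrite /v /u -(divnDMl 1 a hP0); apply: leq_div2r; rewrite /t.
  by apply: pred_lt.
have Sb1 : S (fun j => j %/ P) a d = d * u.
  rewrite -(S_const u a d); apply: S_ext => x hx.
  have h1 : u <= (a + x) %/ P by apply: leq_div2r; rewrite leq_addr.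
  have h2 : (a + x) %/ P <= a' %/ P by apply: leq_div2r; rewrite Ed leq_add2l ltnW.
  rewrite -Eu in h2; by apply/eqP; rewrite eqn_leq h1 h2.
have Sb2 : S (fun j => j %/ P) (a + L) d = d * v.
  rewrite -(S_const v (a + L) d); apply: S_ext => x hx.
  have h1 : v <= (a + L + x) %/ P by apply: leq_div2r; exact: (le1 _ hL hx).
  have h2 : (a + L + x) %/ P <= t' %/ P.
    by apply: leq_div2r; rewrite /t' Ed; exact: (le2 _ hL hx).
  rewrite -Ev in h2; by apply/eqP; rewrite eqn_leq h1 h2.
have shb := S_shift (fun j => j %/ P) a d L.
have shg := S_shift (fun j => j %/ s) a d L.
rewrite -Ed Sb1 Sb2 in shb. rewrite -Ed in shg.
have dec : forall b, S (fun j => j %/ s) b L =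
    Q * S (fun j => j %/ P) b L + S (fun j => (j %/ s) %% Q) b L.
  move=> b; rewrite -S_scale -S_add; apply: S_ext => x _.
  by rewrite {1}(divn_eq ((b + x) %/ s) Q) -divnMA mulnC [s * Q]mulnC.
have bnd : S (fun j => j %/ s) (a + L) d <= S (fun j => j %/ s) a d + d * q.
  rewrite -(S_const q a d) -S_add; apply: S_le2 => x _ /=.
  rewrite addnAC; exact: (div_step1 _ hs hLq).
have := dec a; have := dec a'; rewrite -EF.
move=> E' E.
case: (arith_cases huv hvu) => hv'.
  have shb' := shb; rewrite hv' in shb'.
  exact: (arith1 hQ dpos shb' shg E E' bnd).
rewrite hv' in shb.
have eB := arith2 shb shg E E'.
case: (leqP s L) => hsL.
  have : S (fun j => j %/ s) a d + d * 1 <= S (fun j => j %/ s) (a + L) d.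
    rewrite -(S_const 1 a d) -S_add; apply: S_le2 => x _ /=.
    rewrite addnAC; exact: (div_step2 _ hs hsL).
  rewrite eB muln1; move: dpos; clear; lia.
have hH : forall i, i < k ->
    S (fun j => odd ((j %% s) %/ 2 ^ i)) a L = S (fun j => odd ((j %% s) %/ 2 ^ i)) a' L.
  move=> i hi.
  have := HE (Q + i) (@idx3 _ _ _ _ hi).
  rewrite !(@S_ext (fun j => tst s Q P k K (Q + i) j) (fun j => odd ((j %% s) %/ 2 ^ i))); last first.
    by move=> x _; rewrite tstH.
    by move=> x _; rewrite tstH.
  by rewrite !minE' // (leq_trans (S_leL _ _ _) (ltnW hsL)).
have hM : S (fun j => j %% s) a L = S (fun j => j %% s) a' L.
  rewrite -(@S_bits k (fun j => j %% s) a L); last first.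
    move=> x hx; apply: (mod_bound hs hk); move: han hx; clear; lia.
  rewrite -(@S_bits k (fun j => j %% s) a' L); last first.
    move=> x hx; apply: (mod_bound hs hk); move: han' hx; clear; lia.
  by apply: eq_bigr => i _; rewrite hH.
have shm := S_shift (fun j => j %% s) a d L.
rewrite -Ed -hM in shm.
have did : forall b, S (fun j => j) b d = s * S (fun j => j %/ s) b d + S (fun j => j %% s) b d.
  move=> b; rewrite -S_scale -S_add; apply: S_ext => x _ /=.
  by rewrite {1}(divn_eq (b + x) s) mulnC.
have dL : S (fun j => j) (a + L) d = S (fun j => j) a d + d * L.
  rewrite -(S_const L a d) -S_add; apply: S_ext2 => x _ /=; by rewrite addnAC.
have := did a; have := did (a + L); rewrite eB.
move: dL shm dpos hL; clear; nia.
Qed.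


Lemma upl m : 0 < m -> 2 ^ up_log 2 m < 2 * m.
Proof.
move=> hm; case: (ltngtP m 1) => h.
- by move: hm; rewrite ltnNge -ltnS h.
- have h1 := up_log_gtn (isT : 1 < 2) h.
  have h2 : 0 < up_log 2 m by rewrite up_log_gt0 h.
  by rewrite -(prednK h2) expnS ltn_mul2l.
- by rewrite h up_log1.
Qed.

Lemma nb_aux s D : 1 <= s -> (2 * s) * (3 * D) * (3 * D) <= 2 * (D * (3 * s)) * (D * (3 * s)).
Proof. move=> hs; nia. Qed.

Lemma natbound n s l : 2 <= n -> 1 <= s -> s < l ->
  2 ^ (up_log 2 (minn s n) + up_log 2 (n.-1 %/ ((l %/ s + 1).+1 * s) + 1)
        + up_log 2 (n.-1 %/ ((l %/ s + 1).+1 * s) + 1)) <= 4 * n ^ 2.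
Proof.
move=> hn hs hsl.
set P := (l %/ s + 1).+1 * s.
set D := n.-1 %/ P.
have hq : 1 <= l %/ s by rewrite divn_gt0 // ltnW.
have hP3 : 3 * s <= P by rewrite /P leq_mul2r; lia.
have hx : 2 ^ up_log 2 (minn s n) < 2 * minn s n by apply: upl; rewrite leq_min hs; lia.
have hy : 2 ^ up_log 2 (D + 1) < 2 * (D + 1) by apply: upl; rewrite addn1.
have hdiv : D * P <= n.-1 := leq_divM _ _.
rewrite !expnD.
move: (2 ^ up_log 2 (minn s n)) hx => x hx.
case: (posnP D) => hD.
  rewrite hD add0n up_log1 expn0 !muln1.
  have : minn s n <= n by apply: geq_minr.
  move: hx; clear; nia.
move: (2 ^ up_log 2 (D + 1)) hy => y hy.
have hxs : x < 2 * s by apply: leq_trans hx _; rewrite leq_mul2l geq_minl orbT.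
have hD3 : D * (3 * s) <= n by apply: leq_trans (leq_mul (leqnn D) hP3) _; lia.
have hy3 : y <= 3 * D by lia.
have h1 : x * y * y <= (2 * s) * (3 * D) * (3 * D) by apply: leq_mul; [apply: leq_mul; [apply: ltnW|]|].
apply: leq_trans h1 _.
have h2 : (2 * s) * (3 * D) * (3 * D) <= 2 * (D * (3 * s)) * (D * (3 * s)).
  by apply: nb_aux.
apply: leq_trans h2 _.
have h3 : D * (3 * s) * (D * (3 * s)) <= n * n by apply: leq_mul.
rewrite -mulnA; apply: leq_trans (leq_mul (leqnn 2) h3) _.
rewrite (_ : n ^ 2 = n * n); [lia | by rewrite expnS expn1].
Qed.

Lemma rb (Qr er lr sr nr : R) : (0 < sr)%R -> (sr < lr)%R -> ((Qr - 2) * sr <= lr)%R ->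
  (er * ln 2 <= 2 * ln 2 + 2 * ln nr)%R ->
  (Qr + er <= 2 * lr / sr + 2 * (ln nr / ln 2) + 3)%R.
Proof.
intros hs hsl hQ he.
assert (hl2 : (0 < ln 2)%R) by (pose proof ln_lt_2; lra).
set (r := (lr / sr)%R).
assert (hr : lr = (r * sr)%R) by (unfold r; field; lra).
assert (h1 : (Qr - 2 <= r)%R).
{ apply (Rmult_le_reg_r sr); [lra|]. rewrite <- hr. exact hQ. }
assert (h2 : (1 < r)%R).
{ apply (Rmult_lt_reg_r sr); [lra|]. rewrite <- hr. lra. }
set (w := (ln nr / ln 2)%R).
assert (hw : ln nr = (w * ln 2)%R) by (unfold w; field; lra).
assert (h3 : (er <= 2 + 2 * w)%R).
{ apply (Rmult_le_reg_r (ln 2)); [lra|]. nra. }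
assert (h4 : (2 * lr / sr = 2 * r)%R) by (unfold r; field; lra).
rewrite h4. lra.
Qed.

Lemma INR_expn m e : INR (m ^ e) = (INR m ^ e)%R.
Proof.
elim: e => [|e IH]; first by rewrite expn0.
by rewrite expnS -multE mult_INR IH.
Qed.

Lemma ln_bound e n : (2 ^ e <= 4 * n ^ 2)%N -> (0 < n)%N ->
  (INR e * ln 2 <= 2 * ln 2 + 2 * ln (INR n))%R.
Proof.
move=> h hn.
have hn' : (0 < INR n)%R by apply: lt_0_INR; apply/ltP.
have H : (INR (2 ^ e) <= INR (4 * n ^ 2))%R by apply: le_INR; apply/leP.
rewrite -multE mult_INR !INR_expn in H.
have H2 : (ln (INR 2 ^ e) <= ln (INR 4 * INR n ^ 2))%R.
  case: (Rle_lt_or_eq_dec _ _ H) => H'.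
  - by apply: Rlt_le; apply: ln_increasing => //; apply: pow_lt; simpl; lra.
  - by rewrite H'; apply: Rle_refl.
rewrite ln_pow in H2; last by simpl; lra.
rewrite ln_mult in H2; [|simpl; lra|by apply: pow_lt].
rewrite ln_pow // in H2.
have E4 : INR 4 = (2 ^ 2)%R by simpl; lra.
rewrite E4 ln_pow in H2; last by lra.
have E2 : INR 2 = 2%R by simpl; lra.
rewrite E2 in H2. simpl in H2. lra.
Qed.

Theorem mainTheorem10 (n s l : nat) :
  (2 <= n)%N -> (1 <= s)%N -> (s < l)%N ->
  exists (m : nat) (C : 'I_m -> 'I_n -> bool),
    (INR m <= 2 * INR l / INR s + 2 * (ln (INR n) / ln 2) + 3)%R /\
    solves_burst m n l s C.
Proof.
move=> hn hs hsl.
set q := l %/ s + 1.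
set Q := q.+1. set P := Q * s.
set k := up_log 2 (minn s n).
set K := up_log 2 (n.-1 %/ P + 1).
exists (Q + k + K + K), (fun i j => tst s Q P k K i j).
split.
- have hb := natbound hn hs hsl.
  rewrite -/q -/Q -/P -/k -/K in hb.
  rewrite -!addnA plus_INR !addnA.
  apply: rb.
  + by apply: lt_0_INR; apply/ltP.
  + by apply: lt_INR; apply/ltP.
  + have -> : (INR Q - 2)%R = INR (l %/ s).
      rewrite /Q /q -addn1 -addnA plus_INR /=; lra.
    rewrite -mult_INR; apply: le_INR; apply/leP; exact: leq_divM.
  + by apply: ln_bound => //; lia.
- move=> a1 t1 a2 t2 h1 h2.
  case/and3P: h1 => ha1 ht1 hl1.
  case/and3P: h2 => ha2 ht2 hl2.
  case: (classic (exists i, outcome_vec (Q + k + K + K) n s (fun i j => tst s Q P k K i j) (burst n a1 t1) i <>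
                            outcome_vec (Q + k + K + K) n s (fun i j => tst s Q P k K i j) (burst n a2 t2) i)) => [Hex|Hn].
    by right.
  left.
  have HE : forall i, i < Q + k + K + K ->
      minn (S (fun j => tst s Q P k K i j) a1 (t1 - a1 + 1)) s =
      minn (S (fun j => tst s Q P k K i j) a2 (t2 - a2 + 1)) s.
    move=> i hi.
    have E : outcome_vec (Q + k + K + K) n s (fun i j => tst s Q P k K i j) (burst n a1 t1) (Ordinal hi) =
             outcome_vec (Q + k + K + K) n s (fun i j => tst s Q P k K i j) (burst n a2 t2) (Ordinal hi).
      apply: NNPP => hne; apply: Hn; by exists (Ordinal hi).
    move: E; rewrite /outcome_vec /sat_outcome /burst /=.
    by rewrite (sum_burst (tst s Q P k K i) ha1 ht1) (sum_burst (tst s Q P k K i) ha2 ht2).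
  have hqs : l <= q * s by rewrite /q addn1; apply: ltnW; apply: ltn_ceil; lia.
  have hk : minn s n <= 2 ^ k by apply: up_logP.
  have hK : n.-1 %/ (q.+1 * s) < 2 ^ K.
    apply: leq_trans (up_logP _ _) => //; by rewrite addn1.
  have hs0 : 0 < s by lia.
  have hL1 : 0 < t1 - a1 + 1 by lia.
  have hL2 : 0 < t2 - a2 + 1 by lia.
  have hLq1 : t1 - a1 + 1 <= q * s by lia.
  have hLq2 : t2 - a2 + 1 <= q * s by lia.
  have han1 : a1 + (t1 - a1 + 1) <= n by lia.
  have han2 : a2 + (t2 - a2 + 1) <= n by lia.
  have [ea eL] : a1 = a2 /\ t1 - a1 + 1 = t2 - a2 + 1.
    case: (leqP a1 a2) => hle.
    + exact: (key hs0 hL1 hL2 hLq1 hLq2 han1 han2 hle hk hK HE).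
    + have [e1 e2] := key hs0 hL2 hL1 hLq2 hLq1 han2 han1 (ltnW hle) hk hK
                       (fun i hi => esym (HE i hi)).
      by split.
  have et : t1 = t2 by lia.
  by move=> j; rewrite ea et.
Qed.
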